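(* In the Lie algebra $\mathcal W=\mathcal W(\ell_1,\ell_2,\ell_3,\Gamma)$, the centralizer $\{u\in\mathcal W\mid [u,x^{\alpha}]=0\ \text{for all }\alpha\in\Gamma\}$ of the elements $x^\alpha=x^{\alpha,0}$ equals $\mathcal A[\mathcal D_1]=\mathrm{span}\{x^{\alpha,\vec i}\partial^\mu\mid(\alpha,\vec i)\in\Gamma\times J_1,\ \mu\in\mathbb N^{\ell_1}\times\{0\}^{\ell_2+\ell_3}\}$.
   Context: $\mathbb F$ is a field of characteristic $0$; $\mathbb N=\{0,1,2,\dots\}$. Let $\ell_1,\ell_2,\ell_3\in\mathbb N$ with $\ell=\ell_1+\ell_2+\ell_3>0$, and let $\Gamma$ be an additive subgroup of $\mathbb F^{\ell_2+\ell_3}$ containing an $\mathbb F$-basis of $\mathbb F^{\ell_2+\ell_3}$. Elements $\alpha\in\Gamma$ are written $\alpha=(\alpha_1,\dots,\alpha_\ell)$ with $\alpha_1=\dots=\alpha_{\ell_1}=0$. Let $J=\mathbb N^\ell$, $J_1=\mathbb N^{\ell_1+\ell_2}\times\{0\}^{\ell_3}$; $1_{[p]}$ is the $p$-th unit vector. $\mathcal A=\mathbb F[\Gamma\times J_1]$ has basis $x^{\alpha,\vec i}$ with $x^{\alpha,\vec i}x^{\beta,\vec j}=x^{\alpha+\beta,\vec i+\vec j}$ (out-of-range symbols read as $0$); derivations $\partial_p(x^{\alpha,\vec i})=\alpha_px^{\alpha,\vec i}+i_px^{\alpha,\vec i-1_{[p]}}$, $1\le p\le\ell$; $\mathcal D=\mathrm{span}\{\partial_p\}$,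 $\mathcal D_1=\mathrm{span}\{\partial_1,\dots,\partial_{\ell_1}\}$. $\mathcal W=\mathcal A\otimes\mathbb F[\mathcal D]$ has basis $x^{\alpha,\vec i}\partial^\mu$ ($\mu\in J$) and associative product $u\partial^\mu\cdot v\partial^\nu=\sum_{\lambda\in J}\binom{\mu}{\lambda}u\,\partial^\lambda(v)\,\partial^{\mu+\nu-\lambda}$ ($u,v\in\mathcal A$), with Lie bracket the commutator. *)

(* Defs.v *)
From HB Require Import structures.
From mathcomp Require Import all_boot all_order all_algebra.
Set Implicit Arguments. Unset Strict Implicit. Unset Printing Implicit Defensive.
Import Order.TTheory GRing.Theory Num.Theory.
Local Open Scope ring_scope.

(* The Lie algebra W(l1,l2,l3,Gamma) = A (x) F[D], realised as the free
   F-vector space on the basis symbols x^{alpha,i} d^mu.  An element is a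
   finite formal linear combination (a list of (coefficient, basis symbol));
   two lists denote the same element iff all coefficients [coefW] agree.
   Indices p = 1..l are 'I_(l1 + (l2 + l3)) (0-based). *)

Section WDefs.
Variables (F : fieldType) (l1 l2 l3 : nat).
Local Notation L := (l1 + (l2 + l3))%N.

Definition multi := {ffun 'I_L -> nat}.
(* basis symbol x^{alpha,i} of A : alpha in F^{l2+l3}, i in N^l *)
Definition keyA := ('rV[F]_(l2 + l3) * multi)%type.
(* basis symbol x^{alpha,i} d^mu of W *)
Definition keyW := (keyA * multi)%type.
Definition termA := (F * keyA)%type.
Definition termW := (F * keyW)%type.

(* alpha written as an l-tuple with its first l1 coordinates 0 *)
Definition extG (a : 'rV[F]_(l2 + l3)) (p : 'I_L) : F :=
  row_mx (0 : 'rV[F]_l1) a 0 p.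

Definition unitm (p : 'I_L) : multi := [ffun q => if q == p then 1%N else 0%N].
Definition addm (i j : multi) : multi := [ffun q => (i q + j q)%N].
Definition subm (i j : multi) : multi := [ffun q => (i q - j q)%N].
Definition zerom : multi := [ffun => 0%N].

(* d_p (x^{alpha,i}) = alpha_p x^{alpha,i} + i_p x^{alpha,i-1_[p]}
   (when i_p = 0 the second term has coefficient 0) *)
Definition dA (p : 'I_L) (a : seq termA) : seq termA :=
  flatten [seq [:: (t.1 * extG t.2.1 p, t.2);
                   (t.1 * (t.2.2 p)%:R, (t.2.1, subm t.2.2 (unitm p)))] | t : termA <- a].

Definition dpow (lam : multi) (a : seq termA) : seq termA :=
  foldr (fun p b => iter (lam p) (dA p) b) a (enum 'I_L).

Definition mulA (a b : seq termA) : seq termA :=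
  flatten [seq [seq (s.1 * t.1, (s.2.1 + t.2.1, addm s.2.2 t.2.2)) | t : termA <- b]
          | s : termA <- a].

(* all lambda in J with lambda <= mu (the only lambda with binom(mu,lambda) <> 0) *)
Definition box (mu : multi) : seq multi :=
  [seq lam : multi <- [seq ([ffun p => nat_of_ord (t p)] : multi)
              | t : {ffun 'I_L -> 'I_(\max_(p < L) mu p).+1}]
  | [forall p, lam p <= mu p]%N].

Definition binm (mu lam : multi) : nat := (\prod_(p < L) 'C(mu p, lam p))%N.

(* u d^mu . v d^nu = sum_lambda binom(mu,lambda) u d^lambda(v) d^{mu+nu-lambda} *)
Definition mulW (u v : seq termW) : seq termW :=
  flatten (flatten [seq [seq
     [seq ((binm s.2.2 lam)%:R * w.1, (w.2, subm (addm s.2.2 t.2.2) lam))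
       | w : termA <- mulA [:: (s.1, s.2.1)] (dpow lam [:: (t.1, t.2.1)])]
     | lam <- box s.2.2] | s : termW <- u, t : termW <- v]).

Definition brW (u v : seq termW) : seq termW :=
  mulW u v ++ [seq (- t.1, t.2) | t : termW <- mulW v u].

Definition coefW (u : seq termW) (k : keyW) : F :=
  \sum_(t <- (u : seq termW) | t.2 == k) t.1.

Definition validA (G : {pred 'rV[F]_(l2 + l3)}) (k : keyA) : bool :=
  (k.1 \in G) && [forall p : 'I_L, (l1 + l2 <= p)%N ==> (k.2 p == 0%N)].

Definition inW G (u : seq termW) : bool := all (fun t : termW => validA G t.2.1) u.

Definition inAD1 G (v : seq termW) : bool :=
  all (fun t : termW => validA G t.2.1 &&
                [forall p : 'I_L, (l1 <= p)%N ==> (t.2.2 p == 0%N)]) v.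

Definition xpow (a : 'rV[F]_(l2 + l3)) : seq termW := [:: (1, ((a, zerom), zerom))].

End WDefs.

(* Main.v *)
Require Import Defs.
From HB Require Import structures.
From mathcomp Require Import all_boot all_order all_algebra.
From mathcomp Require Import ring.
Set Implicit Arguments. Unset Strict Implicit. Unset Printing Implicit Defensive.
Import Order.TTheory GRing.Theory Num.Theory.
Local Open Scope ring_scope.

Section Aux.
Variables (F : fieldType) (l1 l2 l3 : nat).
Local Notation L := (l1 + (l2 + l3))%N.
Local Notation multi := (multi l1 l2 l3).
Local Notation keyA := (keyA F l1 l2 l3).
Local Notation keyW := (keyW F l1 l2 l3).
Local Notation termA := (termA F l1 l2 l3).
Local Notation termW := (termW F l1 l2 l3).
Local Notation coefW := (@coefW F l1 l2 l3).

Lemma coefW_cat (s1 s2 : seq termW) k : coefW (s1 ++ s2) k = coefW s1 k + coefW s2 k.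
Proof. by rewrite /Defs.coefW big_cat. Qed.

Lemma coefW_flatten (ss : seq (seq termW)) k :
  coefW (flatten ss) k = \sum_(s <- ss) coefW s k.
Proof. by rewrite /Defs.coefW big_flatten. Qed.

Lemma coefW_opp (s : seq termW) k :
  coefW [seq (- t.1, t.2) | t : termW <- s] k = - coefW s k.
Proof. by rewrite /Defs.coefW big_map sumrN. Qed.

Definition sumA (W : seq termA) : F := \sum_(w <- W) w.1.
Definition allkey (ka : keyA) (W : seq termA) := all (fun w : termA => w.2 == ka) W.

Lemma coefW_mapA (W : seq termA) ka b m k : allkey ka W ->
  coefW [seq (b * w.1, (w.2, m)) | w : termA <- W] k =
  ((ka, m) == k)%:R * (b * sumA W).
Proof.
move=> hW; rewrite /Defs.coefW big_map /sumA big_mkcond mulr_sumr mulr_sumr.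
apply: eq_big_seq => w wW /=.
have /eqP -> : w.2 == ka by move/allP: hW => /(_ w wW).
by case: eqP => _; rewrite ?mul1r ?mul0r.
Qed.

Lemma mulA1 c (ka : keyA) (W : seq termA) kb : allkey kb W ->
  allkey (ka.1 + kb.1, addm ka.2 kb.2) (Defs.mulA [:: (c, ka)] W) /\
  sumA (Defs.mulA [:: (c, ka)] W) = c * sumA W.
Proof.
move=> hW; rewrite /Defs.mulA /= cats0; split.
  apply/allP => t /mapP [w wW ->] /=.
  by have /eqP -> : w.2 == kb by move/allP: hW => /(_ w wW).
by rewrite /sumA big_map mulr_sumr.
Qed.

Local Notation extG := (@extG F l1 l2 l3).
Local Notation zerom := (@zerom l1 l2 l3).

Lemma subm0m (m : multi) : subm zerom m = zerom.
Proof. by apply/ffunP => q; rewrite !ffunE sub0n. Qed.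

Lemma dA_key (a : 'rV[F]_(l2 + l3)) p (W : seq termA) : allkey (a, zerom) W ->
  allkey (a, zerom) (dA p W) /\ sumA (dA p W) = sumA W * extG a p.
Proof.
move=> hW; have key t : t \in W -> t.2 = (a, zerom).
  by move=> tW; apply/eqP; move/allP: hW => /(_ t tW).
split.
  apply/allP => t /flattenP [s /mapP [w wW ->]]; rewrite (key w wW) /=.
  by rewrite !inE subm0m => /orP [] /eqP -> /=.
rewrite /sumA big_flatten big_map mulr_suml /=; apply: eq_big_seq => w wW.
by rewrite (key w wW) !big_cons big_nil /= ffunE mulr0 !addr0.
Qed.

Definition mono (a : 'rV[F]_(l2 + l3)) (lam : multi) : F :=
  \prod_(p <- enum 'I_L) extG a p ^+ lam p.

Lemma dpow_key (a : 'rV[F]_(l2 + l3)) (lam : multi) (W : seq termA) :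
  allkey (a, zerom) W ->
  allkey (a, zerom) (dpow lam W) /\ sumA (dpow lam W) = sumA W * mono a lam.
Proof.
move=> hW; rewrite /dpow /mono; elim: (enum 'I_L) => [|p r [IH1 IH2]] /=.
  by rewrite big_nil mulr1.
rewrite big_cons; set b := foldr _ _ _ in IH1 IH2 *.
suff [h1 h2] : allkey (a, zerom) (iter (lam p) (dA p) b) /\
   sumA (iter (lam p) (dA p) b) = sumA b * extG a p ^+ lam p.
  by rewrite h2 IH2 -mulrA [_ * extG _ _ ^+ _]mulrC.
elim: (lam p) => [|n [IH3 IH4]] /=; first by rewrite mulr1.
have [h1 h2] := dA_key p IH3; by rewrite h2 IH4 exprS -mulrA [_ * extG _ _]mulrC.
Qed.

Lemma dpow0 (W : seq termA) : dpow zerom W = W.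
Proof. by rewrite /dpow; elim: (enum 'I_L) => //= p r ->; rewrite ffunE. Qed.

Local Notation box := (@box l1 l2 l3).

Lemma box_uniq (mu : multi) : uniq (box mu).
Proof.
rewrite /Defs.box filter_uniq // map_inj_uniq ?enum_uniq //.
move=> t1 t2 /ffunP h; apply/ffunP => p; apply: val_inj.
by have := h p; rewrite !ffunE.
Qed.

Definition lem (lam mu : multi) := [forall p, lam p <= mu p]%N.

Lemma mem_box (mu lam : multi) : (lam \in box mu) = lem lam mu.
Proof.
rewrite /Defs.box mem_filter /lem; case: forallP => //= h.
apply/mapP; exists [ffun p => inord (lam p)]; first by rewrite mem_enum.
apply/ffunP => p; rewrite !ffunE inordK // ltnS.
by apply: leq_trans (h p) _; apply: (leq_bigmax_cond (F := fun p => mu p)).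
Qed.

Local Notation binm := (@binm l1 l2 l3).

Lemma addm0 (m : multi) : addm m zerom = m.
Proof. by apply/ffunP => q; rewrite !ffunE addn0. Qed.
Lemma add0m (m : multi) : addm zerom m = m.
Proof. by apply/ffunP => q; rewrite !ffunE. Qed.
Lemma subm0 (m : multi) : subm m zerom = m.
Proof. by apply/ffunP => q; rewrite !ffunE subn0. Qed.

Definition psiL (a : 'rV[F]_(l2 + l3)) (k : keyW) (kk : keyW) (lam : multi) : F :=
  (k == ((kk.1.1 + a, kk.1.2), subm kk.2 lam))%:R * ((binm kk.2 lam)%:R * mono a lam).

Lemma coef_mulW_l (u : seq termW) a k :
  coefW (mulW u (xpow l1 a)) k =
  \sum_(s <- u) s.1 * \sum_(lam <- box s.2.2) psiL a k s.2 lam.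
Proof.
rewrite /mulW coefW_flatten big_flatten /= big_flatten big_map.
apply: eq_bigr => s _; rewrite big_seq1 big_map mulr_sumr.
apply: eq_bigr => lam _.
have hx : allkey (a, zerom) [:: (1 : F, (a, zerom))] by rewrite /allkey /= eqxx.
have [hk hs] := dpow_key lam hx.
have [hk2 hs2] := mulA1 s.1 s.2.1 hk.
rewrite (coefW_mapA _ _ _ hk2) hs2 hs /sumA big_seq1 /= addm0 addm0 /psiL.
rewrite eq_sym mul1r; ring.
Qed.

Lemma box0 (f : multi -> F) : \sum_(lam <- box zerom) f lam = f zerom.
Proof.
rewrite (perm_big [:: zerom]) ?big_seq1 //.
apply: uniq_perm; rewrite ?box_uniq // => lam; rewrite mem_box inE /lem.
apply/forallP/eqP => [h|->]; last by move=> p; rewrite ffunE.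
by apply/ffunP => p; have := h p; rewrite !ffunE leqn0 => /eqP.
Qed.

Lemma binm0 (m : multi) : binm m zerom = 1%N.
Proof. by rewrite /Defs.binm big1 // => p _; rewrite ffunE bin0. Qed.

Lemma coef_mulW_r (u : seq termW) a k :
  coefW (mulW (xpow l1 a) u) k =
  \sum_(s <- u) s.1 * (k == ((a + s.2.1.1, s.2.1.2), s.2.2))%:R.
Proof.
rewrite /mulW coefW_flatten big_flatten /= cats0 big_map.
apply: eq_bigr => t _; rewrite big_map box0 dpow0 binm0 subm0 add0m /Defs.mulA /=.
rewrite /Defs.coefW big_mkcond big_seq1 /= add0m !mul1r eq_sym.
by case: eqP; rewrite ?mulr1 ?mulr0.
Qed.

Definition phi a k (kk : keyW) : F :=
  \sum_(lam <- box kk.2 | lam != zerom) psiL a k kk lam.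

Lemma mono0 a : mono a zerom = 1.
Proof. by rewrite /mono big1 // => p _; rewrite ffunE expr0. Qed.

Lemma coef_br (u : seq termW) a k :
  coefW (brW u (xpow l1 a)) k = \sum_(s <- u) s.1 * phi a k s.2.
Proof.
rewrite /brW coefW_cat coefW_opp coef_mulW_l coef_mulW_r -sumrB.
apply: eq_bigr => s _; rewrite -mulrBr; congr (_ * _).
rewrite (bigD1_seq zerom) ?box_uniq //; last first.
  by rewrite mem_box; apply/forallP => p; rewrite ffunE.
rewrite /psiL /phi binm0 mono0 subm0 mulr1 addrC [a + _]addrC /= mulr1 addKr.
by [].
Qed.

Lemma sum_eq_seq (T : eqType) (r : seq T) (x : T) (c : F) : uniq r ->
  \sum_(j <- r) (if x == j then c else 0) = if x \in r then c else 0.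
Proof.
move=> ur; case: ifP => xr.
  rewrite (bigD1_seq x) //= eqxx big1 ?addr0 // => j /negPf.
  by rewrite eq_sym => ->.
by rewrite big1_seq // => j /andP [_ jr]; case: eqP => // e; rewrite e jr in xr.
Qed.

Lemma regroup (u : seq termW) (g : keyW -> F) (K : seq keyW) : uniq K ->
  (forall s, s \in u -> s.2 \in K) ->
  \sum_(s <- u) s.1 * g s.2 = \sum_(kk <- K) coefW u kk * g kk.
Proof.
move=> uK hK.
transitivity (\sum_(kk <- K) \sum_(s <- u) (if s.2 == kk then s.1 * g s.2 else 0)).
  rewrite exchange_big; apply: eq_big_seq => s su /=.
  by rewrite sum_eq_seq // hK.
apply: eq_big_seq => kk _; rewrite /Defs.coefW mulr_suml [RHS]big_mkcond.
by apply: eq_bigr => s _; case: eqP => [->|]; rewrite ?mul0r.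
Qed.

Lemma extG_l a (p : 'I_L) : (p < l1)%N -> extG a p = 0.
Proof.
move=> h; have -> : p = lshift (l2 + l3) (Ordinal h) by apply: val_inj.
by rewrite /Defs.extG row_mxEl mxE.
Qed.

Lemma extG_r a (r : 'I_(l2 + l3)) : extG a (rshift l1 r) = a 0 r.
Proof. by rewrite /Defs.extG row_mxEr. Qed.

Lemma nz_ex (lam : multi) : lam != zerom -> exists p, (0 < lam p)%N.
Proof.
move=> h; case: (boolP [exists p, 0 < lam p]%N) => [/existsP //|/existsPn h2].
by case/eqP: h; apply/ffunP => p; have := h2 p; rewrite ffunE lt0n negbK => /eqP.
Qed.

Lemma mono_eq0 a (lam : multi) p : (0 < lam p)%N -> extG a p = 0 -> mono a lam = 0.
Proof.
move=> h1 h2; rewrite /mono (bigD1_seq p) ?mem_enum ?enum_uniq //=.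
by rewrite h2 expr0n eqn0Ngt h1 mul0r.
Qed.

Lemma phi_D1 a k (kk : keyW) : [forall p : 'I_L, (l1 <= p)%N ==> (kk.2 p == 0%N)] ->
  phi a k kk = 0.
Proof.
move=> /forallP h; rewrite /phi big1_seq // => lam /andP [nz]; rewrite mem_box => /forallP hl.
have [p hp] := nz_ex nz; rewrite /psiL (@mono_eq0 a lam p) ?mulr0 //.
apply: extG_l; rewrite ltnNge; apply/negP => hp1.
have := h p; rewrite hp1 /= => /eqP h0; have := hl p; rewrite h0 leqn0.
by move/eqP => e; rewrite e in hp.
Qed.

Local Notation unitm := (@unitm l1 l2 l3).

Definition deg (m : multi) : nat := (\sum_(p < L | l1 <= p) m p)%N.

Lemma deg_add (x y : multi) : deg (addm x y) = (deg x + deg y)%N.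
Proof. by rewrite /deg -big_split; apply: eq_bigr => p _; rewrite ffunE. Qed.

Lemma deg_unit (p : 'I_L) : (l1 <= p)%N -> deg (unitm p) = 1%N.
Proof.
move=> h; rewrite /deg (bigD1 p) //= ffunE eqxx big1 // => q /andP [_ qp].
by rewrite ffunE (negPf qp).
Qed.

Lemma deg_ge (m : multi) (q : 'I_L) : (l1 <= q)%N -> (m q <= deg m)%N.
Proof. by move=> h; rewrite /deg (bigD1 q) //= leq_addr. Qed.

Lemma D1_deg (m : multi) :
  [forall p : 'I_L, (l1 <= p)%N ==> (m p == 0%N)] = (deg m == 0%N).
Proof. by rewrite /deg sum_nat_eq0. Qed.

Lemma lem_sub (nu mu lam : multi) : lem lam mu ->
  (nu == subm mu lam) = (lem nu mu && (lam == subm mu nu)).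
Proof.
move=> /forallP h; apply/eqP/andP => [->|[/forallP h1 /eqP ->]].
  split; first by apply/forallP => p; rewrite ffunE leq_subr.
  by apply/eqP/ffunP => p; rewrite !ffunE subKn.
by apply/ffunP => p; rewrite !ffunE subKn.
Qed.

Lemma lem_addsub (nu mu : multi) : lem nu mu -> mu = addm nu (subm mu nu).
Proof. by move=> /forallP h; apply/ffunP => p; rewrite !ffunE subnKC. Qed.

Lemma unitm_inj (nu : multi) (q q0 : 'I_L) :
  addm nu (unitm q) = addm nu (unitm q0) -> q = q0.
Proof.
move/ffunP => /(_ q0); rewrite !ffunE eqxx => /eqP; rewrite eqn_add2l.
by case: (q0 =P q) => [->|]...
Qed.

Lemma binm_unit (mu : multi) q : binm mu (unitm q) = mu q.
Proof.
rewrite /Defs.binm (bigD1 q) //= ffunE eqxx bin1 big1 ?muln1 // => r rq.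
by rewrite ffunE (negPf rq) bin0.
Qed.

Lemma mono_unit a q : mono a (unitm q) = extG a q.
Proof.
rewrite /mono (bigD1_seq q) ?mem_enum ?enum_uniq //= ffunE eqxx expr1.
by rewrite big1 ?mulr1 // => r rq; rewrite ffunE (negPf rq) expr0.
Qed.

Lemma phiB a (kk : keyW) (nu : multi) :
  phi a ((kk.1.1 + a, kk.1.2), nu) kk =
  if lem nu kk.2 && (subm kk.2 nu != zerom) then
    (binm kk.2 (subm kk.2 nu))%:R * mono a (subm kk.2 nu) else 0.
Proof.
set d := subm kk.2 nu; rewrite /phi big_mkcond.
transitivity (\sum_(lam <- box kk.2) (if d == lam then
  (if lem nu kk.2 && (d != zerom) then (binm kk.2 d)%:R * mono a d else 0) else 0)).
  apply: eq_big_seq => lam; rewrite mem_box => hl; rewrite /psiL /=.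
  rewrite !xpair_eqE !eqxx /= (lem_sub nu hl).
  case: (d =P lam) => [<-|ne]; first by rewrite eqxx andbT; case: ifP; case: (lem _ _) => /=;
    rewrite ?mul1r ?mul0r.
  have -> : (lam == d) = false by apply/eqP => e; apply: ne.
  by rewrite andbF mul0r; case: ifP.
rewrite sum_eq_seq ?box_uniq // mem_box; case: ifP => // /negP []; apply/forallP => p.
by rewrite ffunE leq_subr.
Qed.

Lemma deg_ge2 (m : multi) (q r : 'I_L) : (l1 <= q)%N -> (l1 <= r)%N -> r != q ->
  (m q + m r <= deg m)%N.
Proof.
move=> hq hr rq; rewrite /deg (bigD1 q) //= (bigD1 r) /=; last by rewrite hr rq.
by rewrite leq_add2l leq_addr.
Qed.

Lemma point a (be : 'rV[F]_(l2 + l3)) (j mu nu : multi) (p : 'I_L) (kk : keyW) (cc : F) :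
  (l1 <= p)%N -> mu = addm nu (unitm p) ->
  (cc != 0 -> (deg kk.2 <= deg mu)%N) ->
  cc * phi a ((be + a, j), nu) kk =
  \sum_(q < L | (l1 <= q)%N)
     (kk == ((be, j), addm nu (unitm q)))%:R * (cc * ((nu q).+1%:R * extG a q)).
Proof.
move=> hp hmu hdeg.
case: (eqVneq cc 0) => [->|ccnz].
  by rewrite mul0r big1 // => q _; rewrite mul0r mulr0.
have {}hdeg := hdeg ccnz.
case: kk hdeg => [[be' j'] mu'] /= hdeg.
case: (eqVneq (be', j') (be, j)) => [[-> ->]|ne1]; last first.
  rewrite big1 ?mulr0; last by move=> q _; rewrite xpair_eqE (negPf ne1) mul0r.
  rewrite /phi big1_seq ?mulr0 // => lam _; rewrite /psiL /= !xpair_eqE.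
  rewrite (can_eq (addrK a)).
  by case: eqP => [e|]; [case: eqP => [e'|]; [case/eqP: ne1; rewrite e e'|] |];
    rewrite /= ?mul0r.
have := phiB a ((be, j), mu') nu; rewrite /= => ->.
under eq_bigr => q _ do rewrite !xpair_eqE !eqxx /=.
case: (boolP [exists q0 : 'I_L, (l1 <= q0)%N && (mu' == addm nu (unitm q0))]).
  case/existsP => q0 /andP [hq0 /eqP ->].
  rewrite (bigD1 q0) //= eqxx mul1r big1 ?addr0; last first.
    move=> q /andP [_ qne]; case: eqP => [/unitm_inj e|]; last by rewrite mul0r.
    by rewrite e eqxx in qne.
  have hsub : subm (addm nu (unitm q0)) nu = unitm q0.
    by apply/ffunP => r; rewrite !ffunE addKn.
  have hl : lem nu (addm nu (unitm q0)) by apply/forallP => r; rewrite ffunE leq_addr.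
  have hnz : unitm q0 != zerom.
    by apply/eqP => /ffunP /(_ q0); rewrite !ffunE eqxx.
  by rewrite hsub hl hnz /= binm_unit mono_unit !ffunE eqxx addn1.
move=> hno; rewrite big1; last first.
  move=> q hq; case: eqP => [e|]; last by rewrite mul0r.
  by case/existsP: hno; exists q; rewrite hq e eqxx.
case: ifP => [/andP [hl hnz]|]; last by rewrite mulr0.
set d := subm mu' nu in hl hnz *.
case: (boolP [exists r : 'I_L, (r < l1)%N && (0 < d r)%N]).
  case/existsP => r /andP [rl hr].
  by rewrite (@mono_eq0 a d r hr) ?mulr0 // extG_l.
move=> /existsPn hsupp.
have hmu' : mu' = addm nu d by apply: lem_addsub.
have hdd : (deg d <= 1)%N.
  move: hdeg; rewrite hmu hmu' !deg_add deg_unit //.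
  by rewrite leq_add2l.
have [q hq] := nz_ex hnz.
have ql : (l1 <= q)%N.
  by rewrite leqNgt; apply/negP => ql; have := hsupp q; rewrite ql hq.
have dq : d q = 1%N.
  by apply/eqP; rewrite eqn_leq hq andbT (leq_trans (deg_ge d ql)).
have hd : d = unitm q.
  apply/ffunP => r; rewrite [in RHS]ffunE; case: (r =P q) => [->|rq]; first exact: dq.
  move/eqP: rq => rq.
  case: (leqP l1 r) => rl.
    have := deg_ge2 d ql rl rq; rewrite dq => h.
    by apply/eqP; rewrite -leqn0 -(leq_add2l 1) addn0 (leq_trans h).
  by have := hsupp r; rewrite rl /= lt0n negbK => /eqP.
by case/existsP: hno; exists q; rewrite ql hmu' hd eqxx.
Qed.

Lemma core (G : {pred 'rV[F]_(l2 + l3)}) :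
  [pchar F] =i pred0 ->
  (exists B : 'M[F]_(l2 + l3), (forall i, row i B \in G) /\ row_free B) ->
  forall u : seq termW,
  (forall a, a \in G -> forall k, coefW (brW u (xpow l1 a)) k = 0) ->
  forall kk, (0 < deg kk.2)%N -> coefW u kk = 0.
Proof.
move=> hchar [B [hBG hBf]] u H.
set c := coefW u; set K := undup [seq s.2 | s <- u].
have uK : uniq K by apply: undup_uniq.
have hmem s : s \in u -> s.2 \in K by move=> su; rewrite mem_undup map_f.
have cK kk : kk \notin K -> c kk = 0.
  move=> hk; rewrite /c /Defs.coefW big1_seq // => t /andP [/eqP e tu].
  by move: hk; rewrite -e hmem.
have H' a : a \in G -> forall k, \sum_(kk <- K) c kk * phi a k kk = 0.
  by move=> aG k; rewrite /c -(@regroup u (phi a k) K uK hmem) -coef_br H.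
set N := (\max_(kk <- K) deg kk.2)%N.
have hN kk : c kk != 0 -> (deg kk.2 <= N)%N.
  move=> ck; have kK : kk \in K by apply: contraNT ck => /cK ->.
  exact: (leq_bigmax_seq (F := fun kk : keyW => deg kk.2)).
have step kk : (0 < deg kk.2)%N -> (forall kk', (deg kk.2 < deg kk'.2)%N -> c kk' = 0) ->
    c kk = 0.
  case: kk => [[be j] mu] /= hpos hmax.
  have [p /andP [hp hmp]] : exists p : 'I_L, (l1 <= p)%N && (0 < mu p)%N.
    apply/existsP; apply: contraTT hpos => /existsPn hno.
    rewrite -leqNgt leqn0 -D1_deg; apply/forallP => q;
       by have := hno q; case: (l1 <= q)%N => //=; rewrite lt0n negbK.
  set nu := subm mu (unitm p).
  have hmu : mu = addm nu (unitm p).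
    apply/ffunP => r; rewrite !ffunE; case: eqP => [->|]; last by rewrite subn0 addn0.
    by rewrite subnK.
  pose x (q : 'I_L) : keyW := ((be, j), addm nu (unitm q)).
  have hsum a : a \in G ->
      \sum_(q < L | (l1 <= q)%N) c (x q) * ((nu q).+1%:R * extG a q) = 0.
    move=> aG; rewrite -[RHS](H' a aG ((be + a, j), nu)).
    have hdeg kk' : c kk' != 0 -> (deg kk'.2 <= deg mu)%N.
      move=> ck; rewrite leqNgt; apply/negP => lt; by move: ck; rewrite hmax // eqxx.
    under [RHS]eq_bigr => kk' _ do rewrite (@point a be j mu nu p kk' (c kk') hp hmu (hdeg kk')).
    rewrite exchange_big /=; apply: eq_bigr => q _.
    transitivity (\sum_(kk' <- K) (if x q == kk' then c (x q) * ((nu q).+1%:R * extG a q) else 0)).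
      rewrite sum_eq_seq //; case: ifP => // /negbT /cK ->; by rewrite mul0r.
    apply: eq_bigr => kk' _; rewrite eq_sym; case: eqP => [->|]; by rewrite ?mul1r ?mul0r.
  set e : 'cV[F]_(l2 + l3) :=
    \col_r (c (x (rshift l1 r)) * (nu (rshift l1 r)).+1%:R).
  have he : B *m e = 0.
    apply/matrixP => i k0.
    have := hsum _ (hBG i); rewrite big_split_ord /= big_pred0 ?add0r; last first.
      by move=> r; rewrite /= leqNgt ltn_ord.
    move=> h; rewrite !mxE -[RHS]h.
    apply: eq_big => r; first by rewrite /= leq_addr.
    by move=> _; rewrite !mxE extG_r !mxE; ring.
  have e0 : e = 0.
    have hu : B \in unitmx by rewrite -row_free_unit.
    by rewrite -(mulKmx hu e) he mulmx0.
  have hr0 : (p - l1 < l2 + l3)%N by rewrite ltn_subLR // ltn_ord.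
  have hp0 : rshift l1 (Ordinal hr0) = p by apply: val_inj; rewrite /= subnKC.
  have := congr1 (fun M : 'cV[F]_(l2 + l3) => M (Ordinal hr0) 0) e0.
  rewrite !mxE hp0 /x -hmu => /eqP; rewrite mulf_eq0 => /orP [/eqP //|].
  by move/pcharf0P: hchar => ->.
suff main n : forall kk, (N - deg kk.2 <= n)%N -> (0 < deg kk.2)%N -> c kk = 0.
  by move=> kk; apply: (main (N - deg kk.2)%N).
elim: n => [|n IH] kk hn hpos; apply: step => // kk' hlt.
  apply/eqP; apply: contraTT hlt => /hN hle; rewrite -leqNgt.
  by apply: leq_trans hle _; rewrite -subn_eq0 -leqn0.
case: (leqP (deg kk'.2) N) => hle.
  apply: IH; last by apply: leq_ltn_trans hlt.
  by rewrite -ltnS (leq_trans _ hn) // ltn_sub2l // (leq_trans hlt).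
by apply/eqP; apply: contraTT hle => /hN; rewrite -leqNgt.
Qed.

End Aux.

Theorem mainTheorem4 (F : fieldType) (l1 l2 l3 : nat)
    (G : {pred 'rV[F]_(l2 + l3)}) :
  [pchar F] =i pred0 ->
  (0 < l1 + (l2 + l3))%N ->
  0 \in G ->
  (forall a b, a \in G -> b \in G -> a - b \in G) ->
  (exists B : 'M[F]_(l2 + l3), (forall i, row i B \in G) /\ row_free B) ->
  forall u : seq (termW F l1 l2 l3), inW G u ->
    ((forall a, a \in G -> forall k, coefW (brW u (xpow l1 a)) k = 0) <->
     (exists v : seq (termW F l1 l2 l3), inAD1 G v /\ forall k, coefW u k = coefW v k)).
Proof.
move=> hchar _ _ _ hB u hu; split.
  move=> H.
  pose P (t : termW F l1 l2 l3) := [forall p : 'I_(l1 + (l2 + l3)), (l1 <= p)%N ==> (t.2.2 p == 0%N)].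
  exists (filter P u); split.
    apply/allP => t; rewrite mem_filter => /andP [Pt tu].
    by rewrite (allP hu t tu); exact: Pt.
  move=> k; rewrite /coefW big_filter_cond.
  case: (boolP [forall p : 'I_(l1 + (l2 + l3)), (l1 <= p)%N ==> (k.2 p == 0%N)]) => hk.
    apply: eq_bigl => t; rewrite /P; case: eqP => [->|]; by rewrite ?andbF ?andbT.
  rewrite [RHS]big1; last by move=> t /andP [Pt /eqP e]; case/negP: hk; rewrite -e.
  apply: (core hchar hB H); rewrite lt0n -D1_deg //.
case=> v [hv hc] a aG k.
set K := undup ([seq s.2 | s <- u] ++ [seq s.2 | s <- v]).
have uK : uniq K by apply: undup_uniq.
have hmu s : s \in u -> s.2 \in K by move=> su; rewrite mem_undup mem_cat map_f.
have hmv s : s \in v -> s.2 \in K by move=> sv; rewrite mem_undup mem_cat orbC map_f.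
rewrite coef_br (@regroup _ _ _ _ u _ K uK hmu).
under eq_bigr => kk _ do rewrite hc.
rewrite -(regroup _ uK hmv) big1_seq // => s /andP [_ sv].
have /andP [_ hs] := allP hv s sv.
by rewrite phi_D1 ?mulr0.
Qed.
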